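(* Let $q$ be a power of an odd prime and $d\ge 3$ an integer. Any set $A\subset\mathbb{F}_q$ with $|A|\gg q^{1/2}$ has $\gg |A|^d$ square-sum-type tuples, i.e. tuples $(x_1,\dots,x_d)\in A^d$ such that $x_1^2+\cdots+x_d^2$ is a square in $\mathbb{F}_q$.
   Context: An element $t\in\mathbb{F}_q$ is a square if $t=u^2$ for some $u\in\mathbb{F}_q$. $X\ll Y$ means $X\le CY$ for a constant $C>0$ independent of $q$ and $A$ (the hypothesis $|A|\gg q^{1/2}$ means $|A|\ge c\,q^{1/2}$ for a suitable such constant $c$). *)

(* Defs.v *)
From HB Require Import structures.
From mathcomp Require Import all_boot all_order all_algebra all_field.
Set Implicit Arguments. Unset Strict Implicit. Unset Printing Implicit Defensive.
Import GRing.Theory.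
Local Open Scope ring_scope.

Definition is_square (F : finFieldType) (t : F) : bool :=
  [exists u : F, t == u ^+ 2].

Definition square_sum_tuples (F : finFieldType) (A : {set F}) (d : nat)
  : {set d.-tuple F} :=
  [set x : d.-tuple F | all (fun a => a \in A) x
                        & is_square (\sum_(i < d) (tnth x i) ^+ 2)].

(* Main.v *)
Require Import Defs.
From Stdlib Require Import Reals Lra.
From HB Require Import structures.
From mathcomp Require Import all_boot all_order all_algebra all_field.

Module Helpers.
From mathcomp Require Import ring lra.
Set Implicit Arguments. Unset Strict Implicit. Unset Printing Implicit Defensive.
Import Order.TTheory GRing.Theory Num.Theory.
Local Open Scope ring_scope.
Section QC.
Variable F : finFieldType.
Hypothesis hodd : odd #|F|.

Lemma two_neq0 : (2%:R : F) != 0.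
Proof.
apply/negP => /eqP h2.
have c2 : (2%N \in [pchar F]) by rewrite inE /= h2 eqxx.
have := finNzRing_gt1 F; move: hodd.
have -> : #|F| = (2 ^ logn 2 #|F|)%N by exact: (card_pprimeChar c2).
by case: (logn 2 #|F|) => [|k] //; rewrite oddX.
Qed.

Lemma sqP (x : F) : reflect (exists u, x = u ^+ 2) (is_square x).
Proof.
apply: (iffP existsP) => [[u /eqP ->]|[u ->]]; by exists u.
Qed.

Lemma sq0 : is_square (0 : F).
Proof. by apply/sqP; exists 0; rewrite expr0n. Qed.

Lemma sqM (x y : F) : is_square x -> is_square y -> is_square (x * y).
Proof. by move=> /sqP[u ->] /sqP[v ->]; apply/sqP; exists (u * v); rewrite exprMn. Qed.

Lemma neq_opp (u : F) : u != 0 -> u != - u.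
Proof.
move=> u0; apply/negP => /eqP h.
have : 2%:R * u == 0 by rewrite mulr2n mulrDl mul1r {1}h addNr.
by rewrite mulf_eq0 (negPf two_neq0) (negPf u0).
Qed.

Lemma fiber2 (u : F) : u != 0 -> #|[set x : F | x ^+ 2 == u ^+ 2]| = 2%N.
Proof.
move=> u0.
have -> : [set x : F | x ^+ 2 == u ^+ 2] = [set u; -u].
  by apply/setP => x; rewrite !inE eqf_sqr.
by rewrite cards2 neq_opp.
Qed.

Lemma fiber_le2 (A : {set F}) (a : F) : (#|[set x in A | x ^+ 2 == a]| <= 2)%N.
Proof.
case: (boolP [exists u : F, u ^+ 2 == a]) => [/existsP[u /eqP hu]|hn].
  have sub : [set x in A | x ^+ 2 == a] \subset [set u; -u].
    by apply/subsetP => x; rewrite !inE -hu eqf_sqr => /andP[].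
  by apply: (leq_trans (subset_leq_card sub)); rewrite cards2; case: (u != - u).
have -> : [set x in A | x ^+ 2 == a] = set0.
  apply/setP => x; rewrite !inE; apply/negP => /andP[_ h].
  by move/negP: hn; apply; apply/existsP; exists x.
by rewrite cards0.
Qed.

Definition NZS := [set x : F | (x != 0) && is_square x].
Definition NSQ := [set x : F | ~~ is_square x].

Lemma card_NZS : (2 * #|NZS| = #|F|.-1)%N.
Proof.
have -> : #|F|.-1 = #|[set x : F | x != 0]|.
  by rewrite -(cardC1 0); apply: eq_card => x; rewrite !inE.
have E1 : (2 * #|NZS|)%N = (\sum_(s in NZS) 2)%N by rewrite sum_nat_const mulnC.
have E2 : #|[set x : F | x != 0]| =
   (\sum_(s in NZS) \sum_(x in [set x : F | x != 0%R] | x ^+ 2 == s) 1)%N.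
  rewrite -sum1_card; apply: (partition_big (fun x : F => x ^+ 2) (fun s => s \in NZS)).
  move=> x; rewrite !inE => x0; rewrite expf_eq0 (negPf x0) /=.
  by apply/sqP; exists x.
rewrite E1 E2; apply: eq_bigr => s.
rewrite inE => /andP[s0 /sqP[u hu]].
have u0 : u != 0 by apply: contraNneq s0 => u0; rewrite hu u0 expr0n.
rewrite -{1}(fiber2 u0) -sum1_card; apply: eq_bigl => x.
rewrite !inE hu; case: (eqVneq x 0) => [->|] //=; by rewrite expr0n eq_sym expf_eq0 (negPf u0) andbF.
Qed.

Lemma card_F_split : #|F| = (1 + #|NZS| + #|NSQ|)%N.
Proof.
rewrite -(cardsC NSQ) addnC.
have -> : ~: NSQ = 0 |: NZS.
  apply/setP => x; rewrite !inE negbK; case: eqVneq => [->|] /=; by rewrite ?sq0.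
by rewrite cardsU1 inE eqxx.
Qed.

Lemma card_NSQ : #|NSQ| = #|NZS|.
Proof.
have h1 := card_NZS; have h2 := card_F_split.
have : (#|F| > 0)%N by apply: (ltn_trans _ (finNzRing_gt1 F)).
rewrite h2 in h1 => _; move: h1; rewrite add1n /=.
move=> h; apply/eqP; rewrite -(eqn_add2l #|NZS|) -h; by rewrite mul2n -addnn.
Qed.

Lemma nsq_neq0 (x : F) : ~~ is_square x -> x != 0.
Proof. by apply: contraNneq => ->; exact: sq0. Qed.

Lemma sq_nsq (x y : F) : x != 0 -> is_square x -> ~~ is_square y -> ~~ is_square (x * y).
Proof.
move=> x0 /sqP[u hu] hy; apply: contra hy => /sqP[v hv].
apply/sqP; exists (v / u).
have u0 : u != 0 by apply: contraNneq x0 => u0; rewrite hu u0 expr0n.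
rewrite expr_div_n -hv -hu mulrC mulrA mulVf ?mul1r //.
Qed.

Lemma nsq_nsq (x y : F) : ~~ is_square x -> ~~ is_square y -> is_square (x * y).
Proof.
move=> hx hy.
have x0 := nsq_neq0 hx.
have sub : [set x * s | s in NZS] \subset NSQ.
  apply/subsetP => z /imsetP[s]; rewrite inE => /andP[s0 ss] ->.
  rewrite inE mulrC; exact: sq_nsq.
have : [set x * s | s in NZS] == NSQ.
  rewrite eqEcard sub card_imset; first by rewrite card_NSQ leqnn. exact: mulfI.
move/eqP => e.
have : y \in NSQ by rewrite inE.
rewrite -e => /imsetP[s]; rewrite inE => /andP[_ ss] ->.
by rewrite mulrA; apply: sqM => //; apply/sqP; exists x.
Qed.

Definition qeta (x : F) : int := if x == 0 then 0 else if is_square x then 1 else -1.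

Lemma etaM (x y : F) : qeta (x * y) = qeta x * qeta y.
Proof.
rewrite /qeta mulf_eq0.
case: (eqVneq x 0) => [//|x0]; first by rewrite mul0r.
case: (eqVneq y 0) => [//|y0] /=; first by rewrite mulr0.
case hx: (is_square x); case hy: (is_square y).
- by rewrite sqM.
- by rewrite (negPf (sq_nsq x0 hx (negbT hy))).
- by rewrite mulrC (negPf (sq_nsq y0 hy (negbT hx))).
- by rewrite nsq_nsq ?hx ?hy.
Qed.

Lemma sum_eta : \sum_(x : F) qeta x = 0.
Proof.
rewrite (bigID (fun x => is_square x)) /=.
rewrite (bigD1 0) ?sq0 //= {1}/qeta eqxx add0r.
have -> : \sum_(i | is_square i && (i != 0)) qeta i = #|NZS|%:R.
  rewrite -sum1_card natr_sum; apply: eq_big => x; first by rewrite !inE andbC.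
  by move=> /andP[h1 h2]; rewrite /qeta (negPf h2) h1.
have -> : \sum_(i | ~~ is_square i) qeta i = - #|NSQ|%:R.
  rewrite -sum1_card natr_sum -sumrN; apply: eq_big => x; first by rewrite !inE.
  by move=> h; rewrite /qeta (negPf (nsq_neq0 h)) (negPf h).
by rewrite card_NSQ subrr.
Qed.


Lemma qeta_sq (u : F) : u != 0 -> qeta (u ^+ 2) = 1.
Proof.
move=> u0; rewrite /qeta expf_eq0 (negPf u0) andbF.
by have -> : is_square (u ^+ 2) by apply/sqP; exists u.
Qed.

Lemma eta0 : qeta 0 = 0.
Proof. by rewrite /qeta eqxx. Qed.

Lemma corr (a b : F) : a != b -> \sum_t qeta (t + a) * qeta (t + b) = -1.
Proof.
move=> ab.
pose phi t := if t == - b then 1 else (t + a) / (t + b).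
have tb0 : forall t, t != - b -> t + b != 0.
  by move=> t; apply: contraNneq => h; rewrite -(addrK b t) h add0r.
have phi_inj : injective phi.
  have key : forall t, t != - b -> (t + a) / (t + b) != 1.
    move=> t tb; apply/negP => /eqP h.
    have : t + a = t + b by rewrite -[RHS]mul1r -h divfK ?tb0.
    by move/addrI/eqP; rewrite (negPf ab).
  move=> t1 t2; rewrite /phi.
  case: (eqVneq t1 (-b)) => [->|h1]; case: (eqVneq t2 (-b)) => [->|h2] //.
  - by move=> e; move: (key _ h2); rewrite -e eqxx.
  - by move=> e; move: (key _ h1); rewrite e eqxx.
  move/eqP; rewrite eqr_div ?tb0 // => /eqP e.
  have : (a - b) * (t2 - t1) = 0.
    by rewrite -[RHS](subrr ((t1 + a) * (t2 + b))) {2}e; ring.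
  move/eqP; rewrite mulf_eq0 subr_eq0 (negPf ab) /= subr_eq0 => /eqP //.
have S0 : \sum_t qeta (phi t) = 0 by rewrite -(@reindex_inj _ _ _ _ phi (fun _ => true) qeta phi_inj) sum_eta.
rewrite (bigD1 (- b)) //= addNr eta0 mulr0 add0r.
rewrite (bigD1 (- b)) //= in S0.
have e1 : qeta 1 = 1 by rewrite -(expr1n F 2) qeta_sq ?oner_neq0.
rewrite /phi eqxx e1 in S0.
transitivity (\sum_(i | i != - b) qeta (phi i)); last first.
  by apply/eqP; rewrite -subr_eq0 opprK addrC; apply/eqP; exact: S0.
apply: eq_bigr => t tb; rewrite /phi (negPf tb) -etaM.
have -> : (t + a) * (t + b) = (t + a) / (t + b) * (t + b) ^+ 2.
  by rewrite expr2 mulrA divfK ?tb0.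
by rewrite etaM qeta_sq ?tb0 // mulr1.
Qed.

Lemma eta_sqr_le1 (x : F) : qeta x * qeta x <= 1.
Proof. by rewrite /qeta; case: (x == 0); case: (is_square x). Qed.

Lemma corr_le (a b : F) : \sum_t qeta (t + a) * qeta (t + b) <= (a == b)%:R * #|F|%:R.
Proof.
case: (eqVneq a b) => [->|ab]; last by rewrite corr // mul0r.
rewrite mul1r -sum1_card natr_sum; apply: ler_sum => t _; exact: eta_sqr_le1.
Qed.

End QC.

Lemma CS (I : finType) (f g : I -> int) :
  (\sum_i f i * g i) ^+ 2 <= (\sum_i f i ^+ 2) * (\sum_i g i ^+ 2).
Proof.
set G := \sum_i f i ^+ 2; set E := \sum_i f i * g i; set R := \sum_i g i ^+ 2.
have G0 : 0 <= G by apply: sumr_ge0 => i _; exact: sqr_ge0.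
have key : \sum_i (G * g i - E * f i) ^+ 2 = G * (G * R - E ^+ 2).
  transitivity (\sum_i (G ^+ 2 * g i ^+ 2 + (- (2 * G * E)) * (f i * g i) + E ^+ 2 * f i ^+ 2)).
    by apply: eq_bigr => i _; ring.
  rewrite !big_split /= -!mulr_sumr -/G -/E -/R; ring.
have : 0 <= G * (G * R - E ^+ 2) by rewrite -key; apply: sumr_ge0 => i _; exact: sqr_ge0.
case: (ltgtP G 0) => [|Gp|G00].
- by rewrite ltNge G0.
- by rewrite pmulr_rge0 // subr_ge0.
have f0 : forall i, f i = 0.
  move=> i; move/eqP: G00; rewrite psumr_eq0; last by move=> j _; exact: sqr_ge0.
  by move/allP => /(_ i (mem_index_enum i)) /=; rewrite sqrf_eq0 => /eqP.
have -> : E = 0 by rewrite /E big1 // => i _; rewrite f0 mul0r.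
by rewrite G00 !mul0r expr0n.
Qed.

Section Count.
Variable F : finFieldType.
Variable A : {set F}.

Fixpoint g (n : nat) (t : F) : nat :=
  match n with
  | 0 => (t == 0)
  | n'.+1 => (\sum_(x in A) g n' (t - x ^+ 2)%R)%N
  end.

Lemma g_step n (w : F -> int) :
  \sum_t (g n.+1 t)%:R * w t = \sum_t (g n t)%:R * \sum_(x in A) w (t + x ^+ 2).
Proof.
rewrite /=.
under eq_bigr do rewrite natr_sum mulr_suml.
rewrite exchange_big /=.
under [RHS]eq_bigr do rewrite mulr_sumr.
rewrite [RHS]exchange_big /=; apply: eq_bigr => x _.
rewrite (reindex_inj (addIr (x ^+ 2))) /=.
by apply: eq_bigr => t _; rewrite addrK.
Qed.

Lemma big_cons_tuple n (h : n.+1.-tuple F -> int) :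
  \sum_y h y = \sum_x \sum_(z : n.-tuple F) h [tuple of x :: z].
Proof.
rewrite pair_big /=.
rewrite (reindex (fun p : F * n.-tuple F => [tuple of p.1 :: p.2])) /=.
  by apply: eq_bigr => -[x z].
exists (fun y : n.+1.-tuple F => (thead y, [tuple of behead y])).
  move=> [x z] _ /=; congr pair; last exact: val_inj.
move=> y _; exact: (esym (tuple_eta y)).
Qed.

Lemma tuple_sum n (w : F -> int) :
  \sum_(y : n.-tuple F | all (fun a => a \in A) y) w (\sum_(a <- y) a ^+ 2)
  = \sum_t (g n t)%:R * w t.
Proof.
elim: n w => [|n IH] w.
  rewrite (big_pred1 [tuple]); last by move=> y; rewrite [y]tuple0; exact: (esym (eqxx _)).
  rewrite big_nil (bigD1 0) //= eqxx mul1r big1 ?addr0 // => t /negPf ->.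
  by rewrite mul0r.
rewrite g_step big_mkcond big_cons_tuple /=.
rewrite (bigID (fun x => x \in A)) /= [X in _ + X]big1 ?addr0; last first.
  by move=> x xA; apply: big1 => z _; rewrite (negPf xA).
transitivity (\sum_(x in A) \sum_t (g n t)%:R * w (t + x ^+ 2)).
  apply: eq_bigr => x xA; rewrite -(IH (fun s => w (s + x ^+ 2))) [RHS]big_mkcond /=.
  by apply: eq_bigr => z _; rewrite xA /= big_cons addrC.
rewrite exchange_big /=; apply: eq_bigr => t _; by rewrite mulr_sumr.
Qed.

Lemma sum_g n : (\sum_t g n t = #|A| ^ n)%N.
Proof.
elim: n => [|n IH] /=.
  by rewrite (bigD1 0) //= eqxx big1 // => t /negPf ->.
rewrite exchange_big /= expnS -IH -sum_nat_const; apply: eq_bigr => x _.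
by rewrite (reindex_inj (addIr (x ^+ 2))) /=; apply: eq_bigr => t _; rewrite addrK.
Qed.

Lemma g_le n t : (g n.+1 t <= 2 * #|A| ^ n)%N.
Proof.
elim: n t => [|n IH] t.
  rewrite /= expn0 muln1.
  apply: leq_trans (fiber_le2 A t); rewrite -sum1_card big_mkcond /= [X in (_ <= X)%N]big_mkcond.
  apply: leq_sum => x _; rewrite inE; case: (x \in A) => //=.
  by rewrite subr_eq0 eq_sym.
rewrite [g _ _]/= expnS mulnCA -sum_nat_const; apply: leq_sum => x _; exact: IH.
Qed.

End Count.
Section Main.
Variable F : finFieldType.
Hypothesis hodd : odd #|F|.
Variable A : {set F}.
Variable n : nat.

Let N : int := #|A|%:R.
Let q : int := #|F|%:R.

Lemma card_sst :
  (#|square_sum_tuples A n.+2|)%:R =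
  \sum_(y : n.+2.-tuple F | all (fun a => a \in A) y)
      (is_square (\sum_(a <- y) a ^+ 2))%:R :> int.
Proof.
rewrite -sum1_card natr_sum big_mkcond [RHS]big_mkcond /=; apply: eq_bigr => y _.
rewrite inE big_tuple; by case: (all _ _); case: (is_square _).
Qed.

Lemma ind_ge (s : F) : 1 + qeta s <= 2 * (is_square s)%:R :> int.
Proof. rewrite /qeta; case: (eqVneq s 0) => [->|_]; first by rewrite sq0. by case: (is_square s). Qed.

Let G t : int := (g A n.+1 t)%:R.
Let r t : int := \sum_(x in A) qeta (t + x ^+ 2).
Let E : int := \sum_t G t * r t.

Lemma sumG : \sum_t G t = N ^+ n.+1.
Proof. by rewrite /G -natr_sum sum_g natrX. Qed.

Lemma sumG2 : \sum_t G t ^+ 2 <= 2 * N ^+ n * N ^+ n.+1.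
Proof.
rewrite -sumG mulr_sumr; apply: ler_sum => t _.
rewrite expr2 mulrC ler_wpM2r // /G /N -natrX -natrM ler_nat; exact: g_le.
Qed.

Lemma sumr2 : \sum_t r t ^+ 2 <= q * (2 * N).
Proof.
have -> : \sum_t r t ^+ 2 =
   \sum_(x in A) \sum_(x' in A) \sum_t qeta (t + x ^+ 2) * qeta (t + x' ^+ 2).
  transitivity (\sum_t \sum_(x in A) \sum_(x' in A) qeta (t + x ^+ 2) * qeta (t + x' ^+ 2)).
    apply: eq_bigr => t _; rewrite expr2 /r mulr_suml; apply: eq_bigr => x _.
    by rewrite mulr_sumr.
  rewrite exchange_big /=; apply: eq_bigr => x _; by rewrite exchange_big.
apply: (@le_trans _ _ (\sum_(x in A) \sum_(x' in A) (x ^+ 2 == x' ^+ 2)%:R * q)).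
  apply: ler_sum => x _; apply: ler_sum => x' _; exact: corr_le.
apply: (@le_trans _ _ (\sum_(x in A) (2 * q))).
  apply: ler_sum => x _; rewrite -mulr_suml mulrC [X in _ <= X]mulrC ler_wpM2l ?/q ?ler0n //.
  have := fiber_le2 A (x ^+ 2); rewrite -(ler_nat int) => h.
  apply: le_trans h; rewrite -sum1_card natr_sum big_mkcond [X in _ <= X]big_mkcond.
  apply: ler_sum => x' _; rewrite inE; case: (x' \in A) => //=.
  by rewrite eq_sym; case: (_ == _).
rewrite sumr_const /N; suff -> : 2 * q *+ #|A| = q * (2 * #|A|%:R) by []. by rewrite -mulr_natr; ring.
Qed.

Lemma E2 : E ^+ 2 <= 4%:R * q * (N ^+ n.+1) ^+ 2.
Proof.
apply: (le_trans (CS G r)).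
have h1 := sumG2; have h2 := sumr2.
have p1 : 0 <= \sum_t G t ^+ 2 by apply: sumr_ge0 => t _; exact: sqr_ge0.
have p2 : 0 <= \sum_t r t ^+ 2 by apply: sumr_ge0 => t _; exact: sqr_ge0.
apply: (le_trans (ler_pM p1 p2 h1 h2)).
rewrite exprS le_eqVlt; apply/orP; left; apply/eqP; ring.
Qed.

Lemma main_int : (16 * #|F| <= #|A| ^ 2)%N ->
  (#|A| ^ n.+2 <= 4 * #|square_sum_tuples A n.+2|)%N.
Proof.
move=> hq.
rewrite -(ler_nat int) natrM natrX -/N.
have hq' : 16%:R * q <= N ^+ 2 by rewrite /q /N -natrX -natrM ler_nat.
have low : N ^+ n.+2 + E <= 2 * (#|square_sum_tuples A n.+2|)%:R.
  rewrite card_sst mulr_sumr.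
  have -> : N ^+ n.+2 + E =
     \sum_(y : n.+2.-tuple F | all (fun a => a \in A) y) (1 + qeta (\sum_(a <- y) a ^+ 2)).
    rewrite big_split /= (tuple_sum A n.+2 (fun _ => 1)) (tuple_sum A n.+2 (@qeta F)).
    congr (_ + _); last by rewrite g_step.
    by rewrite /N -natrX -(sum_g A n.+2) natr_sum; apply: eq_bigr => t _; rewrite mulr1.
  by apply: ler_sum => y _; exact: ind_ge.
have hE := E2.
have N0 : 0 <= N by rewrite /N ler0n.
have Nn0 : 0 <= N ^+ n.+1 by apply: exprn_ge0.
have q0 : 0 <= q by rewrite /q ler0n.
rewrite exprS in low *.
set K := N ^+ n.+1 in low hE Nn0 *.
set S := (#|square_sum_tuples A n.+2|)%:R in low *.
have key : 4%:R * E ^+ 2 <= (N * K) ^+ 2.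
  apply: (le_trans (ler_wpM2l _ hE)) => //.
  have h := ler_wpM2r (sqr_ge0 K) hq'.
  rewrite exprMn; apply: le_trans h; rewrite le_eqVlt; apply/orP; left; apply/eqP; ring.
have NK : 0 <= N * K by apply: mulr_ge0.
set M := N * K in low key NK *.
nra.
Qed.

End Main.
End Helpers.
Import Helpers.
Open Scope R_scope.
Lemma INR_expn (m k : nat) : INR (m ^ k)%N = INR m ^ k.
Proof.
elim: k => [|k IH]; first by rewrite expn0.
by rewrite expnS mulnE mult_INR IH /=.
Qed.

Theorem lemma6p2 (d : nat) (hd : (3 <= d)%N) :
  exists c C : R, 0 < c /\ 0 < C /\
    forall (F : finFieldType) (A : {set F}),
      odd #|F| ->
      c * sqrt (INR #|F|) <= INR #|A| ->
      C * (INR #|A|) ^ d <= INR #|square_sum_tuples A d|.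
Proof.
exists 4, (1/4); split; first lra; split; first lra.
move=> F A hodd hc.
case: d hd => [|[|n]] // hd.
have hq : (16 * #|F| <= #|A| ^ 2)%N.
  apply/leP; apply: INR_le.
  rewrite mulnE mult_INR INR_expn.
  have s0 := sqrt_pos (INR #|F|).
  have ss := sqrt_sqrt (INR #|F|) (pos_INR _).
  have : (4 * sqrt (INR #|F|)) ^ 2 <= INR #|A| ^ 2.
    apply: pow_incr; split; [lra | exact: hc].
  have e : (4 * sqrt (INR #|F|)) ^ 2 = 16 * INR #|F|.
    rewrite -[in RHS]ss; ring.
  rewrite e => h.
  have h16 : INR 16 = 16 by simpl; ring.
  rewrite h16; exact: h.
have := @main_int F hodd A n hq.
move/leP/le_INR; rewrite mulnE mult_INR INR_expn => h2.
have h4 : INR 4 = 4 by simpl; ring.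
rewrite h4 in h2.
have h3 : INR #|A| ^ n.+2 <= 4 * INR #|square_sum_tuples A n.+2| by exact: h2.
lra.
Qed.
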